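(* Let $k$ be a field of characteristic $\neq 2$, let $\mathfrak g_\boxtimes$ be the Tetrahedron algebra over $k$, and let $\mathfrak f$ be the Lie algebra over $k$ generated by $z_0,z_1,z_2$ subject to the relations, for every $i\in\{0,1,2\}$ with indices modulo $3$: $[[z_i,z_{i+1}],z_{i+2}]=0$; $[z_i,[z_i,z_{i+1}]]=z_{i+1}+[z_{i+2},z_i]$; $\bigl[[z_{i+1},[z_{i+1},[z_{i+1},z_i]]],[z_{i+1},z_i]\bigr]=0$. Then there is a Lie algebra isomorphism $\Phi:\mathfrak g_\boxtimes\to\mathfrak f$ such that $\Phi(X_{01})=2(z_2-[z_1,z_2])$, $\Phi(X_{23})=2(z_2+[z_1,z_2])$, $\Phi(X_{02})=2(z_0-[z_2,z_0])$, $\Phi(X_{31})=2(z_0+[z_2,z_0])$, $\Phi(X_{03})=2(z_1-[z_0,z_1])$, $\Phi(X_{12})=2(z_1+[z_0,z_1])$.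
   Context: The Tetrahedron algebra $\mathfrak g_\boxtimes$ is the Lie algebra over $k$ with generators $X_{ij}$ ($i,j\in\{0,1,2,3\}$, $i\neq j$) and relations $X_{ij}+X_{ji}=0$ for $i\neq j$; $[X_{ij},X_{jk}]=2(X_{ij}+X_{jk})$ for mutually distinct $i,j,k$; $[X_{hi},[X_{hi},[X_{hi},X_{jk}]]]=4[X_{hi},X_{jk}]$ for mutually distinct $h,i,j,k$. *)

(* Defs.v *)
From HB Require Import structures.
From mathcomp Require Import all_boot all_order all_algebra.
Set Implicit Arguments. Unset Strict Implicit. Unset Printing Implicit Defensive.
Import Order.TTheory GRing.Theory Num.Theory.
Local Open Scope ring_scope.

Record lieAlgebra (K : fieldType) := LieAlgebra {
  lie_sort :> lmodType K;
  lie_br : lie_sort -> lie_sort -> lie_sort;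
  lie_brDl : forall (a : K) (x y z : lie_sort),
      lie_br (a *: x + y) z = a *: lie_br x z + lie_br y z;
  lie_brDr : forall (a : K) (x y z : lie_sort),
      lie_br x (a *: y + z) = a *: lie_br x y + lie_br x z;
  lie_brxx : forall x : lie_sort, lie_br x x = 0;
  lie_jacobi : forall x y z : lie_sort,
      lie_br x (lie_br y z) + lie_br y (lie_br z x) + lie_br z (lie_br x y) = 0
}.

Notation "[[ x , y ]]" := (lie_br x y) (format "[[ x ,  y ]]").

Definition lie_hom (K : fieldType) (L M : lieAlgebra K) (f : L -> M) : Prop :=
  (forall (a : K) (x y : L), f (a *: x + y) = a *: f x + f y) /\
  (forall x y : L, f [[x, y]] = [[f x, f y]]).

Definition lie_iso (K : fieldType) (L M : lieAlgebra K) (f : L -> M) : Prop :=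
  lie_hom f /\ bijective f.

Definition presented_by (K : fieldType) (I : Type)
    (rel : forall M : lieAlgebra K, (I -> M) -> Prop)
    (L : lieAlgebra K) (gen : I -> L) : Prop :=
  rel L gen /\
  (forall (M : lieAlgebra K) (y : I -> M), rel M y ->
     exists f : L -> M, lie_hom f /\ forall i, f (gen i) = y i) /\
  (forall (M : lieAlgebra K) (f g : L -> M), lie_hom f -> lie_hom g ->
     (forall i, f (gen i) = g (gen i)) -> forall x, f x = g x).

Definition tet_index := {p : 'I_4 * 'I_4 | p.1 != p.2}.

Definition tet_rel (K : fieldType) (M : lieAlgebra K) (Y : tet_index -> M) : Prop :=
  (forall (i j : 'I_4) (hij : i != j) (hji : j != i),
      Y (exist _ (i, j) hij) + Y (exist _ (j, i) hji) = 0) /\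
  (forall (i j k : 'I_4) (hij : i != j) (hjk : j != k), i != k ->
      [[Y (exist _ (i, j) hij), Y (exist _ (j, k) hjk)]]
        = 2%:R *: (Y (exist _ (i, j) hij) + Y (exist _ (j, k) hjk))) /\
  (forall (h i j k : 'I_4) (hhi : h != i) (hjk : j != k),
      h != j -> h != k -> i != j -> i != k ->
      let A := Y (exist _ (h, i) hhi) in
      [[A, [[A, [[A, Y (exist _ (j, k) hjk)]]]]]] = 4%:R *: [[A, Y (exist _ (j, k) hjk)]]).

Definition is_tetrahedron_algebra (K : fieldType) (L : lieAlgebra K)
    (X : tet_index -> L) : Prop :=
  presented_by (@tet_rel K) X.

Definition f_rel (K : fieldType) (M : lieAlgebra K) (z : 'I_3 -> M) : Prop :=
  forall i : 'I_3,
    let i1 := ordS i in let i2 := ordS (ordS i) in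
    [[ [[z i, z i1]], z i2 ]] = 0 /\
    [[ z i, [[z i, z i1]] ]] = z i1 + [[z i2, z i]] /\
    [[ [[z i1, [[z i1, [[z i1, z i]] ]] ]], [[z i1, z i]] ]] = 0.

Definition is_f_algebra (K : fieldType) (L : lieAlgebra K) (z : 'I_3 -> L) : Prop :=
  presented_by (@f_rel K) z.

Definition tetX (K : fieldType) (L : lieAlgebra K) (X : tet_index -> L)
  (i j : 'I_4) (h : i != j) : L := X (exist _ (i, j) h).

(* Main.v *)
Require Import Defs.
From HB Require Import structures.
From mathcomp Require Import all_boot all_order all_algebra.
From mathcomp Require Import ring.
Set Implicit Arguments. Unset Strict Implicit. Unset Printing Implicit Defensive.
Import GRing.Theory.
Local Open Scope ring_scope.

Inductive zexp := ZAt of nat | Z0 | ZAdd of zexp & zexp | ZOpp of zexp | ZMuln of zexp & nat.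

Fixpoint zden (V : zmodType) (env : seq V) (e : zexp) : V :=
  match e with
  | ZAt n => nth 0 env n
  | Z0 => 0
  | ZAdd e1 e2 => zden env e1 + zden env e2
  | ZOpp e => - zden env e
  | ZMuln e k => zden env e *+ k
  end.

Fixpoint zaddl (l1 l2 : seq int) : seq int :=
  match l1, l2 with
  | [::], _ => l2
  | _, [::] => l1
  | x :: l1', y :: l2' => (x + y) :: zaddl l1' l2'
  end.

Fixpoint znorm (e : zexp) : seq int :=
  match e with
  | ZAt n => ncons n 0 [:: 1]
  | Z0 => [::]
  | ZAdd e1 e2 => zaddl (znorm e1) (znorm e2)
  | ZOpp e => map (fun x => - x) (znorm e)
  | ZMuln e k => map (fun x => x * k%:Z) (znorm e)
  end.

Fixpoint zeval (V : zmodType) (env : seq V) (l : seq int) : V :=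
  match l, env with
  | x :: l', y :: env' => y *~ x + zeval env' l'
  | _, _ => 0
  end.

Lemma zeval_add (V : zmodType) (env : seq V) l1 l2 :
  zeval env (zaddl l1 l2) = zeval env l1 + zeval env l2.
Proof.
elim: l1 l2 env => [|x l1 IH] [|y l2] [|z env] //=; rewrite ?addr0 ?add0r //.
by rewrite IH mulrzDr addrACA.
Qed.

Lemma zeval_opp (V : zmodType) (env : seq V) l :
  zeval env (map (fun x => - x) l) = - zeval env l.
Proof.
elim: l env => [|x l IH] [|z env] //=; rewrite ?oppr0 //.
by rewrite IH mulrNz opprD.
Qed.

Lemma zeval_muln (V : zmodType) (env : seq V) l k :
  zeval env (map (fun x => x * k%:Z) l) = zeval env l *+ k.
Proof.
elim: l env => [|x l IH] [|z env] //=; rewrite ?mul0rn //.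
by rewrite IH mulrnDl mulrzA.
Qed.

Lemma zeval_at (V : zmodType) (env : seq V) n :
  zeval env (ncons n 0 [:: 1]) = nth 0 env n.
Proof.
elim: n env => [|n IH] [|z env] //=; first by case: env => [|? ?] /=; rewrite ?addr0.
by rewrite mulr0z add0r.
Qed.

Lemma znorm_ok (V : zmodType) (env : seq V) e : zden env e = zeval env (znorm e).
Proof.
elim: e => [n||e1 IH1 e2 IH2|e IH|e IH k] /=.
- by rewrite zeval_at.
- by case: env.
- by rewrite zeval_add IH1 IH2.
- by rewrite zeval_opp IH.
- by rewrite zeval_muln IH.
Qed.

Lemma zeval0 (V : zmodType) (env : seq V) l : all (fun x => x == 0) l -> zeval env l = 0.
Proof.
elim: l env => [|x l IH] [|z env] //= /andP[/eqP -> H]; by rewrite mulr0z add0r IH.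
Qed.

Lemma zsolve_lemma (V : zmodType) (env : seq V) e1 e2 :
  all (fun x => x == 0) (znorm (ZAdd e1 (ZOpp e2))) -> zden env e1 = zden env e2.
Proof.
move=> H; apply/eqP; rewrite -subr_eq0; apply/eqP.
by have := zeval0 env H; rewrite -znorm_ok.
Qed.

Ltac zlookup x env :=
  lazymatch env with
  | x :: _ => constr:(0%N)
  | _ :: ?t => let n := zlookup x t in constr:(S n)
  end.

Ltac zapp env x :=
  lazymatch env with
  | nil => constr:(x :: nil)
  | ?h :: ?t => let t' := zapp t x in constr:(h :: t')
  end.

Ltac zlen env :=
  lazymatch env with
  | nil => constr:(0%N)
  | _ :: ?t => let n := zlen t in constr:(S n)
  end.

Ltac zreify e env :=
  lazymatch e with
  | ?a + ?b =>
    let r1 := zreify a env in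
    lazymatch r1 with (?ea, ?env1) =>
      let r2 := zreify b env1 in
      lazymatch r2 with (?eb, ?env2) => constr:((ZAdd ea eb, env2)) end end
  | - ?a =>
    let r1 := zreify a env in
    lazymatch r1 with (?ea, ?env1) => constr:((ZOpp ea, env1)) end
  | ?a *+ ?k =>
    let r1 := zreify a env in
    lazymatch r1 with (?ea, ?env1) => constr:((ZMuln ea k, env1)) end
  | GRing.zero => constr:((Z0, env))
  | _ =>
    match constr:(true) with
    | _ => let n := zlookup e env in constr:((ZAt n, env))
    | _ => let n := zlen env in let env' := zapp env e in constr:((ZAt n, env'))
    end
  end.

Ltac zsolve :=
  lazymatch goal with
  | |- @eq ?V ?l ?r =>
    let r1 := zreify l (@nil V) in
    lazymatch r1 with (?el, ?env1) =>
      let r2 := zreify r env1 in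
      lazymatch r2 with (?er, ?env2) =>
        change (zden env2 el = zden env2 er);
        apply: zsolve_lemma; vm_compute; reflexivity
      end end
  end.



Lemma brDl K (L : lieAlgebra K) (x y z : L) : [[x + y, z]] = [[x, z]] + [[y, z]].
Proof. by rewrite -[x in LHS]scale1r lie_brDl scale1r. Qed.
Lemma brDr K (L : lieAlgebra K) (x y z : L) : [[z, x + y]] = [[z, x]] + [[z, y]].
Proof. by rewrite -[x in LHS]scale1r lie_brDr scale1r. Qed.
Lemma br0l K (L : lieAlgebra K) (z : L) : [[0, z]] = 0.
Proof. have h := brDl 0 0 z; rewrite addr0 in h.
by apply: (addrI [[0, z]]); rewrite addr0 -h. Qed.
Lemma br0r K (L : lieAlgebra K) (z : L) : [[z, 0]] = 0.
Proof. have h := brDr 0 0 z; rewrite addr0 in h.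
by apply: (addrI [[z, 0]]); rewrite addr0 -h. Qed.
Lemma brNl K (L : lieAlgebra K) (x z : L) : [[- x, z]] = - [[x, z]].
Proof. by have := lie_brDl (-1) x 0 z; rewrite addr0 br0l addr0 !scaleN1r. Qed.
Lemma brNr K (L : lieAlgebra K) (x z : L) : [[z, - x]] = - [[z, x]].
Proof. by have := lie_brDr (-1) z x 0; rewrite addr0 br0r addr0 !scaleN1r. Qed.
Lemma brMnl K (L : lieAlgebra K) (x z : L) n : [[x *+ n, z]] = [[x, z]] *+ n.
Proof. by elim: n => [|n IH]; rewrite ?br0l // !mulrS brDl IH. Qed.
Lemma brMnr K (L : lieAlgebra K) (x z : L) n : [[z, x *+ n]] = [[z, x]] *+ n.
Proof. by elim: n => [|n IH]; rewrite ?br0r // !mulrS brDr IH. Qed.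
Lemma brZl K (L : lieAlgebra K) (k : K) (x z : L) : [[k *: x, z]] = k *: [[x, z]].
Proof. by have := lie_brDl k x 0 z; rewrite !addr0 br0l addr0. Qed.
Lemma brZr K (L : lieAlgebra K) (k : K) (x z : L) : [[z, k *: x]] = k *: [[z, x]].
Proof. by have := lie_brDr k z x 0; rewrite !addr0 br0r addr0. Qed.
Lemma brC K (L : lieAlgebra K) (x y : L) : [[y, x]] = - [[x, y]].
Proof.
have := lie_brxx (x + y); rewrite brDl !brDr !lie_brxx add0r addr0.
move=> h; apply/eqP; rewrite -addr_eq0; apply/eqP; rewrite addrC -h.
by [].

Qed.

Ltac expand := repeat progress rewrite ?brMnl ?brMnr ?brZl ?brZr ?brNl ?brNr ?brDl ?brDr ?br0l ?br0r ?lie_brxx.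


Ltac expandin H := repeat progress rewrite ?brMnl ?brMnr ?brZl ?brZr ?brNl ?brNr ?brDl ?brDr ?br0l ?br0r ?lie_brxx in H.

Lemma zwith1 (V : zmodType) (e l r : V) : e = 0 -> l = r + e -> l = r.
Proof. by move=> -> ->; rewrite addr0. Qed.
Lemma zwithN (V : zmodType) (e l r : V) : e = 0 -> l = r - e -> l = r.
Proof. by move=> -> ->; rewrite subr0. Qed.
Ltac zsolve_with J := first [apply: (zwith1 J); zsolve | apply: (zwithN J); zsolve].

Definition rel1 K (L : lieAlgebra K) (x y w : L) :=
  [[ [[x, y]], w ]] = 0 /\ [[x, [[x, y]]]] = y + [[w, x]] /\
  [[ [[y, [[y, [[y, x]]]]]], [[y, x]] ]] = 0.

Lemma table K (L : lieAlgebra K) (a b c : L) :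
  rel1 a b c -> rel1 b c a -> rel1 c a b -> [[ [[a, b]], [[b, c]] ]] = b.
Proof.
move=> [R0a [R0b R0c] ] [R1a [R1b R1c] ] [R2a [R2b R2c] ].
have J := lie_jacobi a b [[b, c]].
rewrite R1b R1a in J; expandin J; rewrite R0b (brC c a) in J.
rewrite (brC [[b, c]]); zsolve_with J.
Qed.

Lemma dgcore K (L : lieAlgebra K) (a b c : L) :
  rel1 a b c -> rel1 b c a -> rel1 c a b ->
  [[ [[b, c]], [[c, [[c, [[b, c]]]]]] ]] = 0 /\
  [[c, [[ [[b, c]], [[c, [[b, c]]]] ]] ]] = 0 /\
  [[c, [[c, [[c, [[b, c]]]]]] ]] = [[c, [[b, c]]]] - [[ [[b, c]], [[ [[b, c]], [[c, [[b, c]]]] ]] ]].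
Proof.
move=> H0 H1 H2.
have vs := table H1 H2 H0.
move: H0 H1 H2 => [R0a [R0b R0c] ] [R1a [R1b R1c] ] [R2a [R2b R2c] ].
set v := [[b, c]] in vs R1a R1b R1c R2b *.
set s := [[c, a]] in vs R0b R2a R2b R2c *.
have rs : [[s, [[c, v]]]] = 0.
  have J := lie_jacobi v c s.
  rewrite R2b (brC v s) vs (brC c v) in J; expandin J; rewrite R1a in J.
  zsolve_with J.
have ar : [[a, [[c, v]]]] = c.
  have J := lie_jacobi a c v.
  rewrite R1a (brC c a) in J; expandin J; rewrite vs in J.
  zsolve_with J.
have vX : [[v, [[c, [[c, v]]]]]] = 0.
  rewrite (brC b c) in R1c; expandin R1c; rewrite -/v in R1c.
  rewrite (brC [[c, [[c, v]]]] v). zsolve_with R1c.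
have cm : [[c, [[v, [[c, v]]]]]] = 0.
  have J := lie_jacobi c v [[c, v]].
  rewrite (brC c [[c, v]]) in J; expandin J; rewrite vX in J.
  zsolve_with J.
have sX : [[s, [[c, [[c, v]]]]]] = - c - [[v, [[c, v]]]].
  have J := lie_jacobi s c [[c, v]].
  rewrite (brC s [[c, v]]) rs (brC c s) R2b in J; expandin J; rewrite (brC a [[c, v]]) ar (brC v [[c, v]]) in J.
  zsolve_with J.
split => //; split => //.
have J := lie_jacobi v s [[c, [[c, v]]]].
rewrite sX (brC v [[c, [[c, v]]]]) vX vs (brC c [[c, [[c, v]]]]) in J; expandin J.
rewrite (brC c v)  in J.
zsolve_with J.
Qed.

Definition yf K (L : lieAlgebra K) (a b c : L) (i j : nat) : L :=
  match i, j with
  | 0, 1 => 2%:R *: (c - [[b, c]])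
  | 1, 0 => - (2%:R *: (c - [[b, c]]))
  | 2, 3 => 2%:R *: (c + [[b, c]])
  | 3, 2 => - (2%:R *: (c + [[b, c]]))
  | 0, 2 => 2%:R *: (a - [[c, a]])
  | 2, 0 => - (2%:R *: (a - [[c, a]]))
  | 3, 1 => 2%:R *: (a + [[c, a]])
  | 1, 3 => - (2%:R *: (a + [[c, a]]))
  | 0, 3 => 2%:R *: (b - [[a, b]])
  | 3, 0 => - (2%:R *: (b - [[a, b]]))
  | 1, 2 => 2%:R *: (b + [[a, b]])
  | 2, 1 => - (2%:R *: (b + [[a, b]]))
  | _, _ => 0
  end.

Definition Yf K (L : lieAlgebra K) (a b c : L) (t : tet_index) : L :=
  yf a b c (val (sval t).1) (val (sval t).2).

Lemma rev_of K (L : lieAlgebra K) (x y e : L) : [[x, y]] = e -> [[y, x]] = - e.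
Proof. by move=> h; rewrite brC h. Qed.

Definition DGp K (L : lieAlgebra K) (x y : L) := [[x, [[x, [[x, y]]]]]] = 4%:R *: [[x, y]].
Definition DG1 K (L : lieAlgebra K) (x y : L) := [[x, [[x, [[x, y]]]]]] = [[x, y]].

Lemma DG_of K (L : lieAlgebra K) (x y : L) : DG1 x y -> DGp (2%:R *: x) (2%:R *: y).
Proof.
rewrite /DG1 /DGp !brZl !brZr => ->; rewrite !scalerA -!natrM. by [].
Qed.
Lemma DG_oppl K (L : lieAlgebra K) (x y : L) : DGp x y -> DGp (- x) y.
Proof. by rewrite /DGp !brNl !brNr !opprK scalerN => ->. Qed.
Lemma DG_oppr K (L : lieAlgebra K) (x y : L) : DGp x y -> DGp x (- y).
Proof. by rewrite /DGp !brNr scalerN => ->. Qed.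

Lemma DG1pair K (L : lieAlgebra K) (c v : L) :
  [[v, [[c, [[c, v]]]]]] = 0 -> [[c, [[v, [[c, v]]]]]] = 0 ->
  [[c, [[c, [[c, v]]]]]] = [[c, v]] - [[v, [[v, [[c, v]]]]]] ->
  DG1 (c - v) (c + v) /\ DG1 (c + v) (c - v).
Proof.
move=> d1 d2 d3; have w := brC c v.
split; rewrite /DG1; do 3 (expand; rewrite ?w ?d1 ?d2 ?d3); zsolve.
Qed.

Lemma tet_F K (L : lieAlgebra K) (a b c : L) :
  rel1 a b c -> rel1 b c a -> rel1 c a b -> tet_rel (Yf a b c).
Proof.
move=> H0 H1 H2.
have f4 := table H2 H0 H1. have f8 := table H0 H1 H2. have f12 := table H1 H2 H0.
have [d1 [d2 d3] ] := dgcore H0 H1 H2.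
have [e1 [e2 e3] ] := dgcore H1 H2 H0.
have [g1 [g2 g3] ] := dgcore H2 H0 H1.
have [D1 D2] := DG1pair d1 d2 d3.
have [D3 D4] := DG1pair e1 e2 e3.
have [D5 D6] := DG1pair g1 g2 g3.
move: H0 H1 H2 => [R0a [R0b R0c] ] [R1a [R1b R1c] ] [R2a [R2b R2c] ].
have f1 := brC a b. have f5 := brC b c. have f9 := brC c a.
have f2' := rev_of R0b. have f3' := rev_of R2a. have f4' := rev_of f4.
have f6' := rev_of R1b. have f7' := rev_of R0a. have f8' := rev_of f8.
have f10' := rev_of R2b. have f11' := rev_of R1a. have f12' := rev_of f12.
have w1 := brC a [[c, a]]. have w2 := brC b [[a, b]]. have w3 := brC c [[b, c]].
have facts := (f1, f5, f9, R0b, f2', R2a, f3', f4, f4', R1b, f6', R0a, f7', f8, f8',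
   R2b, f10', R1a, f11', f12, f12', w1, w2, w3).
have dfacts := (d1, d2, d3, e1, e2, e3, g1, g2, g3).
split; last split.
- move=> [ [|[|[|[|i] ] ] ] Hi] [ [|[|[|[|j] ] ] ] Hj] //= hij hji; rewrite /Yf /=; zsolve.
- move=> [ [|[|[|[|i] ] ] ] Hi] [ [|[|[|[|j] ] ] ] Hj] [ [|[|[|[|k] ] ] ] Hk] //= hij hjk hik;
  rewrite /Yf /=; do 3 (expand; rewrite ?facts); rewrite ?scaler_nat; zsolve.
- move=> [ [|[|[|[|h] ] ] ] Hh] [ [|[|[|[|i] ] ] ] Hi] [ [|[|[|[|j] ] ] ] Hj] [ [|[|[|[|k] ] ] ] Hk] //= hhi hjk hhj hhk hij hik;
  rewrite /Yf /=;
  repeat (apply: DG_oppl || apply: DG_oppr); apply: DG_of; assumption.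
Qed.

Lemma Gside K (G : lieAlgebra K) (e : 'I_4 -> 'I_4 -> G) (p0 p1 p2 p3 : 'I_4) :
 (forall i j, i != j -> e j i = - e i j) ->
 (forall i j k, i != j -> j != k -> i != k -> [[e i j, e j k]] = 2%:R *: (e i j + e j k)) ->
 (forall h i j k, h != i -> j != k -> h != j -> h != k -> i != j -> i != k ->
    [[e h i, [[e h i, [[e h i, e j k]]]]]] = 4%:R *: [[e h i, e j k]]) ->
 p0 != p1 -> p0 != p2 -> p0 != p3 -> p1 != p2 -> p1 != p3 -> p2 != p3 ->
 [[e p0 p2 + e p3 p1, e p0 p3 + e p1 p2]] = (e p1 p2 - e p0 p3) *+ 4 /\
 [[ [[e p0 p2 + e p3 p1, e p0 p3 + e p1 p2]], e p0 p1 + e p2 p3 ]] = 0 /\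
 [[e p0 p2 + e p3 p1, [[e p0 p2 + e p3 p1, e p0 p3 + e p1 p2]] ]] =
    (e p0 p3 + e p1 p2) *+ 16 + [[e p0 p1 + e p2 p3, e p0 p2 + e p3 p1]] *+ 4 /\
 [[ [[e p0 p3 + e p1 p2, [[e p0 p3 + e p1 p2, [[e p0 p3 + e p1 p2, e p0 p2 + e p3 p1]] ]] ]],
    [[e p0 p3 + e p1 p2, e p0 p2 + e p3 p1]] ]] = 0.
Proof.
move=> anti adj dg h01 h02 h03 h12 h13 h23.
have h10 := h01; rewrite eq_sym in h10. have h20 := h02; rewrite eq_sym in h20.
have h30 := h03; rewrite eq_sym in h30. have h21 := h12; rewrite eq_sym in h21.
have h31 := h13; rewrite eq_sym in h31. have h32 := h23; rewrite eq_sym in h32.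
have adjA : forall i j k, i != j -> j != k -> i != k -> [[e i j, e j k]] = 2%:R *: (e i j + e j k).
  by move=> i j k ? ? ?; rewrite adj.
have adjB : forall i j k, i != j -> j != k -> i != k -> [[e i j, e i k]] = 2%:R *: (e i j - e i k).
  move=> i j k hij hjk hik; have := adj j i k _ hik hjk; rewrite eq_sym hij => /(_ isT).
  rewrite (anti i j) // brNl => H; rewrite -[LHS]opprK H !scaler_nat; zsolve.
have adjC : forall i j k, i != j -> j != k -> i != k -> [[e i j, e k j]] = 2%:R *: (e k j - e i j).
  move=> i j k hij hjk hik; rewrite (anti j k) // brNr adjA // !scaler_nat; zsolve.
have adjD : forall i j k, i != j -> j != k -> i != k -> [[e i j, e k i]] = - (2%:R *: (e k i + e i j)).
  move=> i j k hij hjk hik; have hki : k != i by rewrite eq_sym.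
  have hkj : k != j by rewrite eq_sym.
  by rewrite brC adjA.
have an := (anti _ _ h01, anti _ _ h23, anti _ _ h02, anti _ _ h31, anti _ _ h03, anti _ _ h12).
have hBA : [[(e p0 p3), (e p1 p2)]] = - [[(e p1 p2), (e p0 p3)]] by rewrite brC.
have hA : [[ [[(e p1 p2), [[(e p1 p2), (e p0 p3)]] ]], (e p1 p2)]] = - [[(e p1 p2), (e p0 p3)]] *+ 4.
  rewrite brC (dg p1 p2 p0 p3) // scaler_nat; zsolve.
have hB : [[ [[(e p0 p3), [[(e p1 p2), (e p0 p3)]] ]], (e p0 p3)]] = - [[(e p1 p2), (e p0 p3)]] *+ 4.
  have := dg p0 p3 p1 p2 h03 h12 h01 h02 h31 h32; rewrite hBA !brNr scaler_nat => H.
  by rewrite brC H.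
have hJ : [[ [[(e p0 p3), [[(e p1 p2), (e p0 p3)]] ]], (e p1 p2)]] = [[ [[(e p1 p2), [[(e p1 p2), (e p0 p3)]] ]], (e p0 p3)]].
  have J := lie_jacobi (e p1 p2) (e p0 p3) [[(e p1 p2), (e p0 p3)]].
  rewrite lie_brxx addr0 (brC (e p1 p2) [[(e p1 p2), (e p0 p3)]]) brNr in J.
  rewrite (brC (e p1 p2) [[(e p0 p3), [[(e p1 p2), (e p0 p3)]] ]]) (brC (e p0 p3) [[(e p1 p2), [[(e p1 p2), (e p0 p3)]] ]]).
  zsolve_with J.
have P1 : [[e p0 p2 + e p3 p1, e p0 p3 + e p1 p2]] = (e p1 p2 - e p0 p3) *+ 4.
  do 2 (expand; rewrite ?adjA ?adjB ?adjC ?adjD ?an //); rewrite ?scaler_nat; zsolve.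
have W : [[e p0 p3 + e p1 p2, e p0 p2 + e p3 p1]] = (e p0 p3 - e p1 p2) *+ 4.
  by rewrite brC P1; zsolve.
have S1 : [[e p0 p3 + e p1 p2, (e p0 p3 - e p1 p2) *+ 4]] = [[e p1 p2, e p0 p3]] *+ 8.
  expand; rewrite hBA; zsolve.
have S2 : [[e p0 p3 + e p1 p2, [[e p1 p2, e p0 p3]] *+ 8]] =
   ([[e p0 p3, [[e p1 p2, e p0 p3]] ]] + [[e p1 p2, [[e p1 p2, e p0 p3]] ]]) *+ 8.
  expand; zsolve.
have S3 : [[ ([[e p0 p3, [[e p1 p2, e p0 p3]] ]] + [[e p1 p2, [[e p1 p2, e p0 p3]] ]]) *+ 8,
    (e p0 p3 - e p1 p2) *+ 4 ]] = 0.
  expand; rewrite hA hB hJ; zsolve.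
split; last split; last split.
- exact: P1.
- rewrite P1; do 2 (expand; rewrite ?adjA ?adjB ?adjC ?adjD ?an //); rewrite ?scaler_nat; zsolve.
- rewrite P1; do 2 (expand; rewrite ?adjA ?adjB ?adjC ?adjD ?an //); rewrite ?scaler_nat; zsolve.
- by rewrite W S1 S2 S3.
Qed.


Lemma hom0 K (L M : lieAlgebra K) (f : L -> M) : lie_hom f -> f 0 = 0.
Proof.
move=> [H _]; have := H 1 0 0; rewrite !scale1r addr0 => h.
by apply: (addrI (f 0)); rewrite addr0 -h.
Qed.
Lemma homD K (L M : lieAlgebra K) (f : L -> M) x y : lie_hom f -> f (x + y) = f x + f y.
Proof. by move=> [H _]; have := H 1 x y; rewrite !scale1r. Qed.
Lemma homZ K (L M : lieAlgebra K) (f : L -> M) k x : lie_hom f -> f (k *: x) = k *: f x.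
Proof. by move=> hf; have := hf.1 k x 0; rewrite !addr0 hom0 // addr0. Qed.
Lemma homN K (L M : lieAlgebra K) (f : L -> M) x : lie_hom f -> f (- x) = - f x.
Proof. by move=> hf; rewrite -scaleN1r homZ // scaleN1r. Qed.
Lemma homB K (L M : lieAlgebra K) (f : L -> M) x y : lie_hom f -> f (x - y) = f x - f y.
Proof. by move=> hf; rewrite homD // homN. Qed.
Lemma homBr K (L M : lieAlgebra K) (f : L -> M) x y : lie_hom f -> f [[x, y]] = [[f x, f y]].
Proof. by move=> [_ H]. Qed.
Lemma hom_comp K (L M N : lieAlgebra K) (f : L -> M) (g : M -> N) :
  lie_hom f -> lie_hom g -> lie_hom (fun x => g (f x)).
Proof.
move=> hf hg; split => [a x y|x y]; first by rewrite hf.1 hg.1.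
by rewrite !homBr.
Qed.
Lemma hom_id K (L : lieAlgebra K) : lie_hom (fun x : L => x).
Proof. by []. Qed.

Lemma scal1 (K : fieldType) (V : lmodType K) (w : K) (P Q : V) : 4%:R * w = 1 ->
  2%:R *: (w *: (P + Q) - (w * w) *: ((Q - P) *+ 4)) = P.
Proof.
move=> hw; have e1 : w * w * 4%:R = w by rewrite -mulrA [w * 4%:R]mulrC hw mulr1.
have e2 : 2%:R * w * 2%:R = 1 :> K by rewrite -[RHS]hw; ring.
rewrite -[(Q - P) *+ 4]scaler_nat scalerA e1 -scalerBr.
have -> : P + Q - (Q - P) = P *+ 2 by zsolve.
by rewrite -scaler_nat !scalerA -[in RHS](scale1r P); congr (_ *: _); rewrite -[RHS]hw; ring.
Qed.
Lemma scal2 (K : fieldType) (V : lmodType K) (w : K) (P Q : V) : 4%:R * w = 1 ->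
  2%:R *: (w *: (P + Q) + (w * w) *: ((Q - P) *+ 4)) = Q.
Proof.
move=> hw; have e1 : w * w * 4%:R = w by rewrite -mulrA [w * 4%:R]mulrC hw mulr1.
have e2 : 2%:R * w * 2%:R = 1 :> K by rewrite -[RHS]hw; ring.
rewrite -[(Q - P) *+ 4]scaler_nat scalerA e1 -scalerDr.
have -> : P + Q + (Q - P) = Q *+ 2 by zsolve.
by rewrite -scaler_nat !scalerA -[in RHS](scale1r Q); congr (_ *: _); rewrite -[RHS]hw; ring.
Qed.
Lemma scal3 (K : fieldType) (V : lmodType K) (w : K) (x v : V) : 4%:R * w = 1 ->
  w *: (2%:R *: (x - v) + 2%:R *: (x + v)) = x.
Proof.
move=> hw; rewrite -scalerDr.
have -> : x - v + (x + v) = x *+ 2 by zsolve.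
have e2 : w * 2%:R * 2%:R = 1 :> K by rewrite -[RHS]hw; ring.
by rewrite -scaler_nat !scalerA -[in RHS](scale1r x); congr (_ *: _); rewrite -[RHS]hw; ring.
Qed.

Lemma scal_rel K (G : lieAlgebra K) (w : K) (Z0 Z1 Z2 : G) : 4%:R * w = 1 ->
  [[ [[Z0, Z1]], Z2 ]] = 0 ->
  [[Z0, [[Z0, Z1]] ]] = Z1 *+ 16 + [[Z2, Z0]] *+ 4 ->
  [[ [[Z1, [[Z1, [[Z1, Z0]] ]] ]], [[Z1, Z0]] ]] = 0 ->
  rel1 (w *: Z0) (w *: Z1) (w *: Z2).
Proof.
move=> hw G1 G2 G3; rewrite /rel1; expand; rewrite G1 G2 G3 !scaler0; split => //; split => //.
rewrite -!scaler_nat !scalerDr !scalerA; congr (_ *: _ + _ *: _).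
- transitivity (w * ((4%:R * w) * (4%:R * w))); first by ring.
  by rewrite hw !mulr1.
- transitivity (w * w * (4%:R * w)); first by ring.
  by rewrite hw mulr1.
Qed.

Definition eG K (G : lieAlgebra K) (X : tet_index -> G) (i j : 'I_4) : G :=
  match insub (i, j) with Some t => X t | None => 0 end.

Lemma eX K (G : lieAlgebra K) (X : tet_index -> G) (i j : 'I_4) (h : i != j) :
  X (exist _ (i, j) h) = eG X i j.
Proof. by rewrite /eG insubT /=; congr X; apply: val_inj. Qed.

Lemma ord4_cases (i : 'I_4) : i = inord 0 \/ i = inord 1 \/ i = inord 2 \/ i = inord 3.
Proof.
case: i => [ [|[|[|[|i] ] ] ] Hi] //; [left|right;left|right;right;left|right;right;right];
  by apply: val_inj; rewrite /= inordK.
Qed.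
Lemma ord3_cases (i : 'I_3) : i = inord 0 \/ i = inord 1 \/ i = inord 2.
Proof.
case: i => [ [|[|[|i] ] ] Hi] //; [left|right;left|right;right];
  by apply: val_inj; rewrite /= inordK.
Qed.

Theorem theorem5p2 (K : fieldType) (hK : (2%:R : K) != 0)
    (G : lieAlgebra K) (X : tet_index -> G)
    (hG : is_tetrahedron_algebra X)
    (F : lieAlgebra K) (z : 'I_3 -> F)
    (hF : is_f_algebra z) :
  let z0 := z (inord 0) in let z1 := z (inord 1) in let z2 := z (inord 2) in
  let i0 : 'I_4 := inord 0 in let i1 : 'I_4 := inord 1 in
  let i2 : 'I_4 := inord 2 in let i3 : 'I_4 := inord 3 in
  forall (h01 : i0 != i1) (h23 : i2 != i3) (h02 : i0 != i2)
         (h31 : i3 != i1) (h03 : i0 != i3) (h12 : i1 != i2),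
  exists Phi : G -> F, lie_iso Phi /\
    Phi (tetX X h01) = 2%:R *: (z2 - [[z1, z2]]) /\
    Phi (tetX X h23) = 2%:R *: (z2 + [[z1, z2]]) /\
    Phi (tetX X h02) = 2%:R *: (z0 - [[z2, z0]]) /\
    Phi (tetX X h31) = 2%:R *: (z0 + [[z2, z0]]) /\
    Phi (tetX X h03) = 2%:R *: (z1 - [[z0, z1]]) /\
    Phi (tetX X h12) = 2%:R *: (z1 + [[z0, z1]]).
Proof.
cbv zeta; move=> h01 h23 h02 h31 h03 h12.
have h13 : (inord 1 : 'I_4) != inord 3 by rewrite eq_sym.
have h21 : (inord 2 : 'I_4) != inord 1 by rewrite eq_sym.
have h32 : (inord 3 : 'I_4) != inord 2 by rewrite eq_sym.
have h10 : (inord 1 : 'I_4) != inord 0 by rewrite eq_sym.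
have h20 : (inord 2 : 'I_4) != inord 0 by rewrite eq_sym.
have h30 : (inord 3 : 'I_4) != inord 0 by rewrite eq_sym.
have [ [T1 [T2 T3] ] [univG uniqG] ] := hG.
have anti : forall i j, i != j -> eG X j i = - eG X i j.
  move=> i j hij; have hji : j != i by rewrite eq_sym.
  have := T1 i j hij hji; rewrite !eX => H.
  by apply/eqP; rewrite -addr_eq0 addrC H.
have adj : forall i j k, i != j -> j != k -> i != k ->
    [[eG X i j, eG X j k]] = 2%:R *: (eG X i j + eG X j k).
  by move=> i j k hij hjk hik; rewrite -(eX X hij) -(eX X hjk) T2.
have dg : forall h i j k, h != i -> j != k -> h != j -> h != k -> i != j -> i != k ->
    [[eG X h i, [[eG X h i, [[eG X h i, eG X j k]]]]]] = 4%:R *: [[eG X h i, eG X j k]].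
  by move=> h i j k hhi hjk hhj hhk hij hik; rewrite -(eX X hhi) -(eX X hjk); apply: T3.
have [S01 [G01 [G02 G03] ] ] := Gside anti adj dg h01 h02 h03 h12 h13 h23.
have [S12 [G11 [G12 G13] ] ] := Gside anti adj dg h02 h03 h01 h23 h21 h31.
have [S20 [G21 [G22 G23] ] ] := Gside anti adj dg h03 h01 h02 h31 h32 h12.
have h4 : (4%:R : K) != 0.
  have -> : (4%:R : K) = 2%:R * 2%:R by rewrite -natrM.
  by rewrite mulf_neq0.
pose w := (4%:R : K)^-1.
have hw : 4%:R * w = 1 by rewrite mulfV.
pose Zn (i : 'I_3) := match nat_of_ord i with
  | 0 => eG X (inord 0) (inord 2) + eG X (inord 3) (inord 1)
  | 1 => eG X (inord 0) (inord 3) + eG X (inord 1) (inord 2)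
  | _ => eG X (inord 0) (inord 1) + eG X (inord 2) (inord 3) end.
pose y (i : 'I_3) := w *: Zn i.
have fy : f_rel y.
  move=> [ [|[|[|i] ] ] Hi] //; rewrite /y /Zn /=.
  - exact: scal_rel hw G01 G02 G03.
  - exact: scal_rel hw G11 G12 G13.
  - exact: scal_rel hw G21 G22 G23.
have [fz [univF uniqF] ] := hF.
have o1 : ordS (inord 0 : 'I_3) = inord 1 by apply: val_inj; rewrite /= !inordK.
have o2 : ordS (inord 1 : 'I_3) = inord 2 by apply: val_inj; rewrite /= !inordK.
have o0 : ordS (inord 2 : 'I_3) = inord 0 by apply: val_inj; rewrite /= !inordK.
have R0 : rel1 (z (inord 0)) (z (inord 1)) (z (inord 2)).
  by have := fz (inord 0); rewrite /= o1 o2.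
have R1 : rel1 (z (inord 1)) (z (inord 2)) (z (inord 0)).
  by have := fz (inord 1); rewrite /= o2 o0.
have R2 : rel1 (z (inord 2)) (z (inord 0)) (z (inord 1)).
  by have := fz (inord 2); rewrite /= o0 o1.
have [Phi [hPhi PhiX] ] := univG F _ (tet_F R0 R1 R2).
have [Psi [hPsi Psiz] ] := univF G y fy.
have PsiN : forall x, Psi (- x) = - Psi x := fun x => homN x hPsi.
have PsiZ : forall k x, Psi (k *: x) = k *: Psi x := fun k x => homZ k x hPsi.
have PsiB : forall x y, Psi (x - y) = Psi x - Psi y := fun x y => homB x y hPsi.
have PsiD : forall x y, Psi (x + y) = Psi x + Psi y := fun x y => homD x y hPsi.
have PsiBr : forall x y, Psi [[x, y]] = [[Psi x, Psi y]] := fun x y => homBr x y hPsi.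
have PhiZ : forall k x, Phi (k *: x) = k *: Phi x := fun k x => homZ k x hPhi.
have PhiD : forall x y, Phi (x + y) = Phi x + Phi y := fun x y => homD x y hPhi.
have c1 : forall x, Psi (Phi x) = x.
{ apply: (uniqG G (fun x => Psi (Phi x)) (fun x => x) (hom_comp hPhi hPsi) (@hom_id _ G)).
  move=> [ [i j] h]; rewrite PhiX /Yf /= eX; move: h.
  case: (ord4_cases i) => [->|[->|[->|->] ] ]; case: (ord4_cases j) => [->|[->|[->|->] ] ] h; rewrite !inordK //=;
  try by rewrite eqxx in h.
  all: rewrite ?PsiN PsiZ ?PsiB ?PsiD PsiBr !Psiz /y /Zn.
  all: rewrite !inordK //.
  all: rewrite brZl brZr scalerA ?S01 ?S12 ?S20.
  all: rewrite ?(anti _ _ h01) ?(anti _ _ h23) ?(anti _ _ h02) ?(anti _ _ h31) ?(anti _ _ h03) ?(anti _ _ h12).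
  all: try (apply/eqP; rewrite eqr_opp; apply/eqP).
  all: first [exact: scal1 hw | exact: scal2 hw]. }
have c2 : forall u, Phi (Psi u) = u.
{ apply: (uniqF F (fun u => Phi (Psi u)) (fun u => u) (hom_comp hPsi hPhi) (@hom_id _ F)).
  move=> i; rewrite Psiz /y; case: (ord3_cases i) => [->|[->|->] ]; rewrite /Zn !inordK //=.
  all: rewrite PhiZ PhiD -?(eX X h01) -?(eX X h23) -?(eX X h02) -?(eX X h31)
     -?(eX X h03) -?(eX X h12) !PhiX /Yf /= !inordK //=.
  all: exact: scal3 hw. }
exists Phi; split; first by split => //; exists Psi.
by rewrite /tetX !PhiX /Yf /= !inordK.
Qed.
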